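(* Let $\mathbb{V}$ be a vector space of dimension $n\geq 3$ over a finite field $\mathbb{F}$, with a fixed basis $\mathcal{B}=\{v_1,\dots,v_n\}$, and let $\mathbb{IG}(\mathbb{V})$ be its nonzero component graph with respect to $\mathcal{B}$. Then $\operatorname{sdim}_M(\mathbb{IG}(\mathbb{V}))=|V(\mathbb{IG}(\mathbb{V}))|-2^{n-1}$.
   Context: For $a=a_1v_1+\dots+a_nv_n\in\mathbb{V}$, its skeleton is $S_{\mathcal{B}}(a)=\{v_i: a_i\neq 0\}$. The nonzero component graph $\mathbb{IG}(\mathbb{V})$ has vertex set $\mathbb{V}\setminus\{0\}$, distinct $a,b$ adjacent iff $S_{\mathcal{B}}(a)\cap S_{\mathcal{B}}(b)\neq\emptyset$. For a connected graph $G$, a vertex $w$ strongly resolves $u,v$ if some shortest $u$–$w$ path contains $v$ or some shortest $v$–$w$ path contains $u$; $\operatorname{sdim}_M(G)$ is the minimum size of a set $W$ such that every pair of distinct vertices is strongly resolved by some vertex of $W$. *)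

(* Defs.v *)
From HB Require Import structures.
From mathcomp Require Import all_boot all_order all_algebra.
Set Implicit Arguments. Unset Strict Implicit. Unset Printing Implicit Defensive.
Import GRing.Theory.
Local Open Scope ring_scope.

(* The vector space V of dimension n over F with fixed basis B = {v_1..v_n}
   is represented in coordinates w.r.t. B, i.e. as row vectors 'rV[F]_n;
   v_i corresponds to the i-th coordinate. *)

Definition skeleton (F : fieldType) (n : nat) (a : 'rV[F]_n) : {set 'I_n} :=
  [set i | a 0 i != 0].

Notation nzvec F n := {a : 'rV[F]_n | a != 0}.

Definition IG_adj (F : fieldType) (n : nat) : rel (nzvec F n) :=
  fun a b => (a != b) && (skeleton (val a) :&: skeleton (val b) != set0).

Definition walk (T : eqType) (e : rel T) (u : T) (p : seq T) (w : T) : bool :=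
  path e u p && (last u p == w).

Definition shortest_walk (T : eqType) (e : rel T) (u : T) (p : seq T) (w : T) : Prop :=
  walk e u p w /\ forall q, walk e u q w -> (size p <= size q)%N.

Definition strongly_resolves (T : eqType) (e : rel T) (w u v : T) : Prop :=
  (exists p, shortest_walk e u p w /\ v \in u :: p) \/
  (exists p, shortest_walk e v p w /\ u \in v :: p).

Definition strong_resolving_set (T : finType) (e : rel T) (W : {set T}) : Prop :=
  forall u v : T, u != v -> exists2 w, w \in W & strongly_resolves e w u v.

Definition is_sdimM (T : finType) (e : rel T) (k : nat) : Prop :=
  (exists W : {set T}, strong_resolving_set e W /\ #|W| = k) /\
  (forall W : {set T}, strong_resolving_set e W -> (k <= #|W|)%N).

(* Main.v *)
Require Import Defs.
From HB Require Import structures.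
From mathcomp Require Import all_boot all_order all_algebra.
From mathcomp Require Import zify.
Set Implicit Arguments. Unset Strict Implicit. Unset Printing Implicit Defensive.
Import GRing.Theory.

Section Walks.
Variables (T : eqType) (e : rel T).

Lemma walk0 u w : walk e u [::] w -> u = w.
Proof. by rewrite /walk /= => /eqP. Qed.

Lemma walk_cons u x r w : walk e u (x :: r) w = e u x && walk e x r w.
Proof. by rewrite /walk /= andbA. Qed.

Lemma shortest_split u p w v : shortest_walk e u p w -> v \in p ->
  exists (p1 p2 : seq T), [/\ walk e v p2 w, (size p = size p1 + (size p2).+1)%N,
      (p1 = [::] -> e u v) & forall q, walk e u q w -> (size p <= size q)%N].
Proof.
case=> Hw Hmin Hv; move: Hw Hmin; case/splitPr: Hv => p1 p2 Hw Hmin.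
exists p1, p2; split => //.
- by move: Hw; rewrite /walk cat_path last_cat /= => /andP[/andP[_ /andP[_ ->]] ->].
- by rewrite size_cat.
- by move=> p10; move: Hw; rewrite p10 walk_cons => /andP[].
Qed.

Lemma walk_size1 u q w : walk e u q w -> u != w -> (0 < size q)%N.
Proof. by case: q => // /walk0 ->; rewrite eqxx. Qed.

Lemma walk_size2 u q w : walk e u q w -> u != w -> ~~ e u w -> (1 < size q)%N.
Proof.
case: q => [/walk0 ->|x [|y r]] //; first by rewrite eqxx.
by rewrite walk_cons => /andP[H /walk0 <-] _; rewrite H.
Qed.

Lemma sw1 u w : e u w -> u != w -> shortest_walk e u [:: w] w.
Proof.
move=> H uw; split; first by rewrite walk_cons H /walk /= eqxx.
by move=> q Hq; apply: walk_size1 Hq uw.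
Qed.

Lemma sw2 u z w : e u z -> e z w -> u != w -> ~~ e u w ->
  shortest_walk e u [:: z; w] w.
Proof.
move=> H1 H2 uw nuw; split; first by rewrite !walk_cons H1 H2 /walk /= eqxx.
by move=> q Hq; apply: walk_size2 Hq uw nuw.
Qed.

End Walks.

Section IG.
Variables (F : finFieldType) (m : nat).
Local Notation n := m.+1.
Local Notation T := (nzvec F n).
Local Notation e := (@IG_adj F n).
Local Notation sk a := (skeleton (val a)).

Lemma sk_neq0 (a : T) : sk a != set0.
Proof.
move: (valP a); apply: contraNneq => H. apply/eqP/rowP => i; rewrite !mxE.
have : i \notin sk a by rewrite H inE.
by rewrite inE negbK => /eqP.
Qed.

Definition vecS (S : {set 'I_n}) : 'rV[F]_n := \row_j (if j \in S then 1 else 0)%R.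

Lemma skel_vecS S : skeleton (vecS S) = S.
Proof.
apply/setP=> j; rewrite inE mxE; case: (j \in S) => /=; [exact: oner_neq0 | by rewrite eqxx].
Qed.

Lemma vecS_neq0 S : S != set0 -> vecS S != 0%R.
Proof.
apply: contraNneq => H; rewrite -(skel_vecS S) H; apply/eqP/setP=> j.
by rewrite !inE mxE eqxx.
Qed.

Definition nzS S (H : S != set0) : T := exist _ (vecS S) (vecS_neq0 H).

Lemma sk_nzS S (H : S != set0) : sk (nzS H) = S.
Proof. exact: skel_vecS. Qed.

Lemma setT_neq0 : [set: 'I_n] != set0.
Proof. by apply/set0Pn; exists ord0. Qed.

Definition ones : T := nzS setT_neq0.

Lemma adj_sym a b : e a b = e b a.
Proof. by rewrite /IG_adj eq_sym setIC. Qed.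

Lemma ones_adj (a : T) : a != ones -> e a ones.
Proof. by move=> H; rewrite /IG_adj H sk_nzS setIT sk_neq0. Qed.

Lemma intersecting_bound (k : nat) (A : {set {set 'I_k}}) :
  (forall S S', S \in A -> S' \in A -> S :&: S' != set0) -> (#|A| * 2 <= 2 ^ k)%N.
Proof.
move=> H.
pose B := [set ~: S | S in A].
have cB : #|B| = #|A| by apply: card_imset; exact: setC_inj.
have dAB : A :&: B = set0.
  apply/setP => S; rewrite !inE; apply/negP => /andP[SA /imsetP[S' S'A SE]].
  by move: (H _ _ SA S'A); rewrite SE setIC setICr eqxx.
have := cardsU A B; rewrite dAB cards0 subn0 cB => HU.
have : (#|A :|: B| <= 2 ^ k)%N.
  have cT : #|[set: {set 'I_k}]| = 2 ^ k.
    by rewrite -powersetT card_powerset cardsT card_ord.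
  by rewrite -cT; apply: subset_leq_card; apply/subsetP => S _; rewrite inE.
lia.
Qed.

Lemma sw_ex u w : u != w -> exists p, shortest_walk e u p w /\ w \in u :: p.
Proof.
move=> uw; case: (boolP (e u w)) => H.
  by exists [:: w]; split; [apply: sw1|rewrite !inE eqxx orbT].
exists [:: ones; w]; split; last by rewrite !inE eqxx !orbT.
apply: sw2 => //.
  apply: ones_adj; apply: contraNneq H => uo; rewrite adj_sym uo ones_adj //.
  by rewrite -uo eq_sym.
rewrite adj_sym; apply: ones_adj; apply: contraNneq H => wo.
by rewrite wo; apply: ones_adj; rewrite -wo.
Qed.


Definition mmd (u v : T) := (sk u == sk v) || (sk u :&: sk v == set0).

Lemma mmd_res u v w : u != v -> mmd u v ->
  (exists p, shortest_walk e u p w /\ v \in u :: p) -> w = v.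
Proof.
move=> uv Hm [p [Hs]]; rewrite inE eq_sym (negbTE uv) /= => vp.
have [p1 [p2 [Hw Hsz Hp1 Hmin]]] := shortest_split Hs vp.
case: (eqVneq w v) => // wv; exfalso.
case: p2 Hw Hsz => [|x r] Hw Hsz; first by rewrite (walk0 Hw) eqxx in wv.
move: Hw; rewrite walk_cons => /andP[evx Hr].
case/orP: Hm => [/eqP Hsk | /eqP Hdis].
- case: (eqVneq x u) => [xu|xu].
    by move: (Hmin r); rewrite -xu => /(_ Hr); rewrite Hsz /=; lia.
  have eux : e u x.
    rewrite /IG_adj Hsk; move/andP: evx => [_ ->]; by rewrite andbT eq_sym xu.
  by move: (Hmin (x :: r)); rewrite walk_cons eux Hr Hsz /= => /(_ isT); lia.
- have p1n : p1 != [::].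
    by apply/eqP => p10; move: (Hp1 p10); rewrite /IG_adj Hdis eqxx andbF.
  have s1 : (0 < size p1)%N by rewrite lt0n size_eq0.
  have uo : u != ones.
    apply: contraNneq (sk_neq0 v) => uo.
    by rewrite -Hdis uo /ones sk_nzS setTI.
  case: (eqVneq x ones) => [xo|xo].
    move: (Hmin (x :: r)); rewrite walk_cons xo ones_adj // -xo Hr Hsz /=.
    by move=> /(_ isT); lia.
  move: (Hmin (ones :: x :: r)); rewrite !walk_cons ones_adj // adj_sym ones_adj //.
  rewrite Hr Hsz /= => /(_ isT); rewrite -[X in _ <= X]add0n leq_add2r leqn0; by move/eqP=> p0; rewrite p0 in s1.
Qed.

Lemma lower (W : {set T}) : strong_resolving_set e W ->
  (#|{: T}| - 2 ^ m <= #|W|)%N.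
Proof.
move=> HW.
have key : forall u v, u \notin W -> v \notin W -> u != v -> ~~ mmd u v.
  move=> u v uW vW uv; apply/negP => Hm.
  have [w wW [H|H]] := HW u v uv.
  - by move: wW; rewrite (mmd_res uv Hm H) (negbTE vW).
  - have vu : v != u by rewrite eq_sym.
    have Hm' : mmd v u by rewrite /mmd eq_sym setIC.
    by move: wW; rewrite (mmd_res vu Hm' H) (negbTE uW).
pose A := [set sk u | u in ~: W].
have injA : {in ~: W &, injective (fun u : T => sk u)}.
  move=> u v; rewrite !inE => uW vW Hs; apply/eqP; apply: contraT => uv.
  by move: (key u v uW vW uv); rewrite /mmd Hs eqxx.
have cA : #|A| = #|~: W| by apply: card_in_imset.
have Hint : forall S S', S \in A -> S' \in A -> S :&: S' != set0.
  move=> S S' /imsetP[u uW ->] /imsetP[v vW ->].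
  case: (eqVneq u v) => [->|uv]; first by rewrite setIid sk_neq0.
  move: uW vW; rewrite !inE => uW vW.
  by move: (key u v uW vW uv); rewrite /mmd negb_or => /andP[].
have := intersecting_bound Hint.
have := cardsC W; rewrite cA expnS => <- H2; lia.
Qed.

Definition I0 : {set T} := [set u : T | (ord0 \in sk u) && (val u == vecS (sk u))].

Lemma inI0 u : (u \in I0) = (ord0 \in sk u) && (val u == vecS (sk u)).
Proof. by rewrite inE. Qed.

Lemma card_I0 : #|I0| = 2 ^ m.
Proof.
pose Fam := [set S : {set 'I_n} | ord0 \in S].
have inj : {in I0 &, injective (fun u : T => sk u)}.
  move=> u v; rewrite !inI0 => /andP[_ /eqP Hu] /andP[_ /eqP Hv] Hs.
  by apply: val_inj; rewrite Hu Hv Hs.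
have im : [set sk u | u in I0] = Fam.
  apply/setP => S; rewrite inE; apply/imsetP/idP.
    by case=> u; rewrite inI0 => /andP[Hu _] ->.
  move=> S0; have SN : S != set0 by apply/set0Pn; exists ord0.
  exists (nzS SN); last by rewrite sk_nzS.
  by rewrite inI0 sk_nzS S0 /= eqxx.
have e1 : [set ~: S | S in Fam] = ~: Fam.
  apply/setP => S; rewrite !inE; apply/imsetP/idP.
    by case=> S'; rewrite inE => H ->; rewrite !inE negbK.
  move=> H; exists (~: S); last by rewrite setCK.
  by rewrite !inE.
have cC : #|~: Fam| = #|Fam| by rewrite -e1; apply: card_imset; exact: setC_inj.
have cT : #|[set: {set 'I_n}]| = 2 ^ n by rewrite -powersetT card_powerset cardsT card_ord.
have := cardsC Fam; rewrite cC -cardsT cT.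
rewrite -(card_in_imset inj) im expnS; lia.
Qed.

Lemma res_I u v : u \in I0 -> v \in I0 -> u != v ->
  forall i, i \in sk v -> i \notin sk u ->
  exists2 w, w \in ~: I0 & exists p, shortest_walk e u p w /\ v \in u :: p.
Proof.
move=> uI vI uv i iv iu.
have iN : [set i] != set0 by apply/set0Pn; exists i; rewrite inE.
pose w := nzS iN.
have skw : sk w = [set i] by apply: sk_nzS.
have wI : w \notin I0.
  apply: contra iu; rewrite inI0 skw inE => /andP[/eqP <- _].
  by move: uI; rewrite inI0 => /andP[].
exists w; first by rewrite inE.
exists [:: v; w]; split; last by rewrite !inE eqxx orbT.
apply: sw2.
- rewrite /IG_adj uv; apply/set0Pn; exists ord0; rewrite inE; apply/andP; split.
    by move: uI; rewrite inI0 => /andP[].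
  by move: vI; rewrite inI0 => /andP[].
- rewrite /IG_adj skw; apply/andP; split; first by apply: contraNneq wI => <-.
  by apply/set0Pn; exists i; rewrite in_setI iv in_set1 eqxx.
- by apply: contraNneq wI => <-.
- rewrite /IG_adj skw negb_and; apply/orP; right; rewrite negbK; apply/eqP/setP => j.
  rewrite in_setI in_set1 in_set0.
  by case: (eqVneq j i) => [->|]; rewrite ?(negbTE iu) ?andbF.
Qed.

End IG.

Theorem theorem4p16 (F : finFieldType) (n : nat) :
  (3 <= n)%N ->
  is_sdimM (@IG_adj F n) (#|{: nzvec F n}| - 2 ^ (n - 1))%N.
Proof.
case: n => [//|m] _; rewrite subSS subn0.
split; last by move=> W HW; apply: lower.
exists (~: I0 F m); split; last first.
  by have := cardsC (I0 F m); rewrite card_I0 => <-; rewrite addKn.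
move=> u v uv.
case: (boolP (u \in ~: I0 F m)) => uW.
  by exists u => //; right; apply: sw_ex; rewrite eq_sym.
case: (boolP (v \in ~: I0 F m)) => vW.
  by exists v => //; left; apply: sw_ex.
move: uW vW; rewrite !in_setC !negbK => uI vI.
have sne : skeleton (val u) != skeleton (val v).
  apply: contraNneq uv => Hs; apply/eqP/val_inj.
  move: uI vI; rewrite !inI0 => /andP[_ /eqP ->] /andP[_ /eqP ->].
  by rewrite Hs.
case: (boolP (skeleton (val v) \subset skeleton (val u))) => svu.
  have : ~~ (skeleton (val u) \subset skeleton (val v)).
    by apply: contra sne => suv; rewrite eqEsubset suv svu.
  case/subsetPn => i iu iv.
  have vu : v != u by rewrite eq_sym.
  have [w wW H] := res_I vI uI vu iu iv.
  by exists w => //; right.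
case/subsetPn: svu => i iv iu.
have [w wW H] := res_I uI vI uv iv iu.
by exists w => //; left.
Qed.
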